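(* Let $(\Omega,d)$ be an $A$-uniform space with completion $\overline\Omega$, and let $a\in\partial\Omega=\overline\Omega\setminus\Omega$. Then $\overline\Omega\setminus\{a\}$ is locally annularly quasiconvex around $a$ with $\Lambda=4A$.
   Context: $A$-uniform: $(\Omega,d)$ noncomplete and any $x,y\in\Omega$ are joined by an arc-length parametrized curve $\gamma:[0,l]\to\Omega$ with $l\le A\,d(x,y)$ and $\operatorname{dist}(\gamma(t),\partial\Omega)\ge\frac1A\min\{t,l-t\}$. A metric space $Z$ is locally annularly quasiconvex around $x_0$ if there exist $\Lambda\ge2$ and $r_0>0$ such that for every $0<r\le r_0$, each pair of points $x,y\in B(x_0,2r)\setminus B(x_0,r)$ can be connected within $B(x_0,\Lambda r)\setminus B(x_0,r/\Lambda)$ by a curve of length at most $\Lambda d(x,y)$. *)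

(* Defs.v *)
From Stdlib Require Import Reals Lra List Sorting.Sorted.
Import ListNotations.
Open Scope R_scope.

Record MetricSpace := {
  mcar :> Type;
  mdist : mcar -> mcar -> R;
  mdist_refl : forall x, mdist x x = 0;
  mdist_sep : forall x y, mdist x y = 0 -> x = y;
  mdist_sym : forall x y, mdist x y = mdist y x;
  mdist_tri : forall x y z, mdist x z <= mdist x y + mdist y z
}.

Arguments mdist {m} _ _.

Definition cauchy_seq {X : MetricSpace} (u : nat -> X) : Prop :=
  forall eps, 0 < eps -> exists N, forall n m, (N <= n)%nat -> (N <= m)%nat ->
    mdist (u n) (u m) < eps.

Definition seq_converges_to {X : MetricSpace} (u : nat -> X) (p : X) : Prop :=
  forall eps, 0 < eps -> exists N, forall n, (N <= n)%nat -> mdist (u n) p < eps.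

Definition complete (X : MetricSpace) : Prop :=
  forall u : nat -> X, cauchy_seq u -> exists p, seq_converges_to u p.

Definition dense {X : MetricSpace} (Om : X -> Prop) : Prop :=
  forall x eps, 0 < eps -> exists y, Om y /\ mdist x y < eps.

Definition is_completion_of (X : MetricSpace) (Om : X -> Prop) : Prop :=
  complete X /\ dense Om.

Definition subspace_noncomplete {X : MetricSpace} (Om : X -> Prop) : Prop :=
  exists u : nat -> X, (forall n, Om (u n)) /\ cauchy_seq u /\
    ~ (exists p, Om p /\ seq_converges_to u p).

Definition partition (a b : R) (ts : list R) : Prop :=
  Sorted Rle ts /\ Forall (fun t => a <= t <= b) ts.

Fixpoint variation {X : MetricSpace} (g : R -> X) (ts : list R) : R :=
  match ts with
  | t1 :: ((t2 :: _) as rest) => mdist (g t1) (g t2) + variation g rest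
  | _ => 0
  end.

Definition curve_length {X : MetricSpace} (g : R -> X) (a b L : R) : Prop :=
  is_lub (fun v => exists ts, partition a b ts /\ v = variation g ts) L.

Definition arclength_param {X : MetricSpace} (g : R -> X) (l : R) : Prop :=
  forall s t, 0 <= s -> s <= t -> t <= l -> curve_length g s t (t - s).

Definition continuous_on_interval {X : MetricSpace} (g : R -> X) (a b : R) : Prop :=
  forall t, a <= t <= b -> forall eps, 0 < eps -> exists delta, 0 < delta /\
    forall s, a <= s <= b -> Rabs (s - t) < delta -> mdist (g s) (g t) < eps.

(* A-uniform, for Om viewed inside its completion X (boundary = X \ Om).
   "dist(g t, boundary) >= c" is written out as: every boundary point is at
   distance >= c. *)
Definition A_uniform (X : MetricSpace) (Om : X -> Prop) (A : R) : Prop :=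
  subspace_noncomplete Om /\
  forall x y, Om x -> Om y ->
    exists (g : R -> X) (l : R),
      0 <= l /\ g 0 = x /\ g l = y /\
      (forall t, 0 <= t <= l -> Om (g t)) /\
      arclength_param g l /\
      l <= A * mdist x y /\
      (forall t, 0 <= t <= l -> forall b, ~ Om b ->
          mdist (g t) b >= / A * Rmin t (l - t)).

Definition loc_ann_qc (X : MetricSpace) (Z : X -> Prop) (x0 : X) (Lambda : R) : Prop :=
  2 <= Lambda /\
  exists r0, 0 < r0 /\
  forall r, 0 < r -> r <= r0 ->
  forall x y, Z x -> Z y ->
    r <= mdist x0 x < 2 * r -> r <= mdist x0 y < 2 * r ->
    exists (g : R -> X) (L : R),
      continuous_on_interval g 0 1 /\ g 0 = x /\ g 1 = y /\
      (forall t, 0 <= t <= 1 ->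
         Z (g t) /\ r / Lambda <= mdist x0 (g t) < Lambda * r) /\
      curve_length g 0 1 L /\ L <= Lambda * mdist x y.

(* Main.v *)
Require Import Defs.
From Stdlib Require Import Reals.
From Stdlib Require Import Lra Lia List Sorting.Sorted ClassicalEpsilon Classical.
Import ListNotations.
Open Scope R_scope.

Definition Lip {X : MetricSpace} (f : R -> X) (a b K : R) : Prop :=
  forall s t, a <= s -> s <= t -> t <= b -> mdist (f s) (f t) <= K * (t - s).

Lemma Lip_mono {X : MetricSpace} (f : R -> X) a b K K' :
  K <= K' -> Lip f a b K -> Lip f a b K'.
Proof.
  intros HK H s t h1 h2 h3. specialize (H s t h1 h2 h3).
  assert (K * (t - s) <= K' * (t - s)) by (apply Rmult_le_compat_r; lra). lra.
Qed.

Lemma Lip_glue {X : MetricSpace} (f g : R -> X) a b c K :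
  Lip f a b K -> Lip g b c K -> f b = g b ->
  Lip (fun t => if Rle_dec t b then f t else g t) a c K.
Proof.
  intros Hf Hg E s t h1 h2 h3.
  destruct (Rle_dec t b) as [Ht|Ht]; destruct (Rle_dec s b) as [Hs|Hs].
  - apply Hf; lra.
  - lra.
  - pose proof (mdist_tri _ (f s) (f b) (g t)).
    pose proof (Hf s b h1 Hs (Rle_refl _)).
    assert (mdist (f b) (g t) <= K * (t - b)) by (rewrite E; apply Hg; lra).
    nra.
  - apply Hg; lra.
Qed.

Lemma Lip_affine {X : MetricSpace} (g : R -> X) a b K c e p q :
  Lip g a b K -> 0 <= c -> a <= c * (p - e) -> c * (q - e) <= b ->
  Lip (fun t => g (c * (t - e))) p q (K * c).
Proof.
  intros H Hc Ha Hb s t h1 h2 h3.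
  assert (c * (p - e) <= c * (s - e)) by (apply Rmult_le_compat_l; lra).
  assert (c * (s - e) <= c * (t - e)) by (apply Rmult_le_compat_l; lra).
  assert (c * (t - e) <= c * (q - e)) by (apply Rmult_le_compat_l; lra).
  eapply Rle_trans. apply H; lra. right; ring.
Qed.

Lemma Lip_rev {X : MetricSpace} (g : R -> X) a b K c e p q :
  Lip g a b K -> 0 <= c -> a <= c * (e - q) -> c * (e - p) <= b ->
  Lip (fun t => g (c * (e - t))) p q (K * c).
Proof.
  intros H Hc Ha Hb s t h1 h2 h3.
  assert (c * (e - q) <= c * (e - t)) by (apply Rmult_le_compat_l; lra).
  assert (c * (e - t) <= c * (e - s)) by (apply Rmult_le_compat_l; lra).
  assert (c * (e - s) <= c * (e - p)) by (apply Rmult_le_compat_l; lra).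
  rewrite mdist_sym.
  eapply Rle_trans. apply H; lra. right; ring.
Qed.

Lemma Lip_cont {X : MetricSpace} (f : R -> X) a b K :
  0 <= K -> Lip f a b K -> continuous_on_interval f a b.
Proof.
  intros HK H t Ht eps Heps. exists (eps / (K + 1)). split.
  { apply Rdiv_lt_0_compat; lra. }
  intros s Hs Hst.
  assert (Hd : mdist (f s) (f t) <= K * Rabs (s - t)).
  { destruct (Rle_dec s t).
    - rewrite Rabs_left1 by lra. replace (K * - (s - t)) with (K * (t - s)) by ring.
      apply H; lra.
    - rewrite Rabs_right by lra. rewrite mdist_sym. apply H; lra. }
  assert (K * Rabs (s - t) <= K * (eps / (K + 1))).
  { apply Rmult_le_compat_l; lra. }
  assert (K * (eps / (K + 1)) < eps).
  { apply (Rmult_lt_reg_r (K + 1)). lra. field_simplify; lra. }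
  lra.
Qed.

Lemma variation_bound {X : MetricSpace} (f : R -> X) a b K :
  0 <= K -> Lip f a b K ->
  forall ts t0, Sorted Rle (t0 :: ts) -> Forall (fun t => a <= t <= b) (t0 :: ts) ->
  variation f (t0 :: ts) <= K * (b - t0).
Proof.
  intros HK H ts. induction ts as [|t1 ts IH]; intros t0 HS HF.
  - simpl. inversion HF; subst. apply Rmult_le_pos; lra.
  - apply Sorted_inv in HS as [HS HR]. inversion HR; subst.
    inversion HF as [|? ? Ht0 HF1]; subst. inversion HF1 as [|? ? Ht1 HF2]; subst.
    change (variation f (t0 :: t1 :: ts)) with (mdist (f t0) (f t1) + variation f (t1 :: ts)).
    specialize (IH t1 HS HF1).
    assert (mdist (f t0) (f t1) <= K * (t1 - t0)) by (apply H; lra).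
    nra.
Qed.

Lemma Lip_length {X : MetricSpace} (f : R -> X) a b K :
  0 <= K -> a <= b -> Lip f a b K -> exists L, curve_length f a b L /\ L <= K * (b - a).
Proof.
  intros HK Hab H.
  set (E := fun v => exists ts, Defs.partition a b ts /\ v = variation f ts).
  assert (Hub : is_upper_bound E (K * (b - a))).
  { intros v Hv. destruct Hv as [ts [[HS HF] Hv]]. subst v. destruct ts as [|t0 ts].
    - simpl. apply Rmult_le_pos; lra.
    - pose proof (variation_bound f a b K HK H ts t0 HS HF).
      inversion HF; subst.
      assert (K * (b - t0) <= K * (b - a)) by (apply Rmult_le_compat_l; lra). lra. }
  destruct (completeness E) as [L HL].
  - exists (K * (b - a)); exact Hub.
  - exists 0. exists []. split; [split; constructor | reflexivity].
  - exists L. split; [exact HL|]. apply HL. exact Hub.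
Qed.

Lemma arc_lip {X : MetricSpace} (g : R -> X) l : arclength_param g l -> Lip g 0 l 1.
Proof.
  intros H s t h1 h2 h3. destruct (H s t h1 h2 h3) as [Hub _].
  assert (E : mdist (g s) (g t) = variation g [s; t]) by (simpl; ring).
  rewrite E, Rmult_1_l. apply Hub. exists [s; t]. split; [|reflexivity].
  split.
  - apply Sorted_cons; [apply Sorted_cons; constructor | constructor; exact h2].
  - apply Forall_cons; [lra|]. apply Forall_cons; [lra|]. constructor.
Qed.

Definition hh (n : nat) : R := (/2) ^ n.

Lemma hh_pos n : 0 < hh n.
Proof. unfold hh. apply pow_lt. lra. Qed.

Lemma hh_S n : hh (S n) = hh n / 2.
Proof. unfold hh. simpl. field. Qed.

Lemma hh_le m n : (m <= n)%nat -> hh n <= hh m.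
Proof.
  induction 1. lra. rewrite hh_S. pose proof (hh_pos m0). lra.
Qed.

Lemma hh_small y : 0 < y -> exists n, hh n < y.
Proof.
  intro Hy. destruct (pow_lt_1_zero (/2)) with (y := y) as [N HN].
  - rewrite Rabs_right; lra.
  - exact Hy.
  - exists N. specialize (HN N (le_n _)). rewrite Rabs_right in HN.
    exact HN. apply Rle_ge, pow_le. lra.
Qed.

Lemma hh_find t : 0 < t <= 1 -> exists n, hh (S n) <= t <= hh n.
Proof.
  intros Ht. destruct (hh_small t) as [N HN]; [lra|].
  revert HN. induction N as [|N IH]; intro HN.
  - unfold hh in HN. simpl in HN. lra.
  - destruct (Rlt_dec (hh N) t) as [H|H].
    + apply IH; exact H.
    + exists N. lra.
Qed.

Definition UnifCurves {X : MetricSpace} (Om : X -> Prop) (A : R) : Prop :=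
  forall x y, Om x -> Om y -> exists (g : R -> X) (l : R),
    0 <= l /\ g 0 = x /\ g l = y /\ (forall t, 0 <= t <= l -> Om (g t)) /\
    arclength_param g l /\ l <= A * mdist x y.

Lemma tail_curve {X : MetricSpace} (Om : X -> Prop) A (hA : 0 < A) (hd : dense Om)
  (hU : UnifCurves Om A) (x : X) (eta : R) (he : 0 < eta) :
  exists T : R -> X, T 0 = x /\ Lip T 0 1 eta /\ (forall t, 0 < t <= 1 -> Om (T t)).
Proof.
  set (eps := eta / (4 * A)).
  assert (Heps : 0 < eps) by (unfold eps; apply Rdiv_lt_0_compat; lra).
  assert (Hp : forall n, exists p, Om p /\ mdist x p < eps * hh n).
  { intro n. apply hd. apply Rmult_lt_0_compat; [exact Heps | apply hh_pos]. }
  assert (Hp' : exists p : nat -> X, forall n, Om (p n) /\ mdist x (p n) < eps * hh n).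
  { exists (fun n => proj1_sig (constructive_indefinite_description _ (Hp n))).
    intro n. exact (proj2_sig (constructive_indefinite_description _ (Hp n))). }
  clear Hp. destruct Hp' as [p Hp].
  assert (HG : forall n, exists gl : (R -> X) * R,
    0 <= snd gl /\ fst gl 0 = p (S n) /\ fst gl (snd gl) = p n /\
    (forall t, 0 <= t <= snd gl -> Om (fst gl t)) /\
    arclength_param (fst gl) (snd gl) /\ snd gl <= A * mdist (p (S n)) (p n)).
  { intro n. destruct (hU (p (S n)) (p n) (proj1 (Hp _)) (proj1 (Hp _))) as [g [l H]].
    exists (g, l). exact H. }
  assert (HG' : exists G : nat -> (R -> X) * R, forall n,
    0 <= snd (G n) /\ fst (G n) 0 = p (S n) /\ fst (G n) (snd (G n)) = p n /\
    (forall t, 0 <= t <= snd (G n) -> Om (fst (G n) t)) /\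
    arclength_param (fst (G n)) (snd (G n)) /\ snd (G n) <= A * mdist (p (S n)) (p n)).
  { exists (fun n => proj1_sig (constructive_indefinite_description _ (HG n))).
    intro n. exact (proj2_sig (constructive_indefinite_description _ (HG n))). }
  clear HG. destruct HG' as [G HG].
  set (c := fun n => 2 * snd (G n) / hh n).
  set (piece := fun n t => fst (G n) (c n * (t - hh (S n)))).
  assert (Hc0 : forall n, 0 <= c n).
  { intro n. unfold c. pose proof (hh_pos n). destruct (HG n) as [Hl _].
    apply Rmult_le_pos; [lra|]. left; apply Rinv_0_lt_compat; lra. }
  assert (Hcl : forall n, c n * (hh n - hh (S n)) = snd (G n)).
  { intro n. unfold c. rewrite hh_S. pose proof (hh_pos n). field. lra. }
  assert (Hceta : forall n, c n <= eta).
  { intro n. destruct (HG n) as (Hl0 & _ & _ & _ & _ & Hl).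
    pose proof (hh_pos n) as Hh.
    pose proof (mdist_tri _ (p (S n)) x (p n)) as Ht.
    rewrite (mdist_sym _ (p (S n)) x) in Ht.
    destruct (Hp (S n)) as [_ H1]. destruct (Hp n) as [_ H2].
    rewrite hh_S in H1.
    assert (A * mdist (p (S n)) (p n) <= A * (eps * (hh n / 2) + eps * hh n)).
    { apply Rmult_le_compat_l; lra. }
    assert (Ae : A * eps = eta / 4) by (unfold eps; field; lra).
    assert (2 * snd (G n) <= eta * hh n) by nra.
    unfold c. unfold Rdiv.
    replace eta with (eta * hh n * / hh n) by (field; lra).
    apply Rmult_le_compat_r; [left; apply Rinv_0_lt_compat; lra | lra]. }
  assert (Hpl : forall n, Lip (piece n) (hh (S n)) (hh n) eta).
  { intro n. apply Lip_mono with (K := 1 * c n); [rewrite Rmult_1_l; apply Hceta|].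
    destruct (HG n) as (Hl0 & _ & _ & _ & Har & _).
    apply Lip_affine with (a := 0) (b := snd (G n)).
    - apply arc_lip; exact Har.
    - apply Hc0.
    - rewrite Rminus_diag, Rmult_0_r; lra.
    - rewrite Hcl; lra. }
  assert (Hps : forall n, piece n (hh (S n)) = p (S n)).
  { intro n. unfold piece. rewrite Rminus_diag, Rmult_0_r. apply HG. }
  assert (Hpe : forall n, piece n (hh n) = p n).
  { intro n. unfold piece. rewrite Hcl. apply HG. }
  set (T := fun t => if Rle_dec t 0 then x
                     else piece (epsilon (inhabits 0%nat) (fun k => hh (S k) <= t <= hh k)) t).
  assert (HT : forall n t, 0 < t -> hh (S n) <= t <= hh n -> T t = piece n t).
  { intros n t Ht Hn. unfold T. destruct (Rle_dec t 0) as [H|_]; [lra|].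
    pose proof (epsilon_spec (inhabits 0%nat) (fun k => hh (S k) <= t <= hh k)
                  (ex_intro _ n Hn)) as Hm. simpl in Hm.
    revert Hm. generalize (epsilon (inhabits 0%nat) (fun k => hh (S k) <= t <= hh k)).
    intros m Hm.
    destruct (Compare_dec.lt_eq_lt_dec m n) as [[Hlt|Heq]|Hgt].
    - assert (n = S m).
      { destruct (Compare_dec.le_lt_dec (S (S m)) n) as [Hle|Hle]; [|lia].
        pose proof (hh_le _ _ Hle). rewrite (hh_S (S m)) in H.
        pose proof (hh_pos (S m)). lra. }
      subst n. assert (t = hh (S m)) by lra. subst t.
      rewrite Hps, Hpe. reflexivity.
    - subst; reflexivity.
    - assert (m = S n).
      { destruct (Compare_dec.le_lt_dec (S (S n)) m) as [Hle|Hle]; [|lia].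
        pose proof (hh_le _ _ Hle). rewrite (hh_S (S n)) in H.
        pose proof (hh_pos (S n)). lra. }
      subst m. assert (t = hh (S n)) by lra. subst t.
      rewrite Hps, Hpe. reflexivity. }
  assert (Hchain : forall k n s t, hh (S (n + k)) <= s <= hh (n + k) ->
            hh (S n) <= t <= hh n -> s <= t -> mdist (T s) (T t) <= eta * (t - s)).
  { induction k as [|k IH]; intros n s t Hs Ht Hst.
    - rewrite Nat.add_0_r in Hs. pose proof (hh_pos (S n)).
      rewrite (HT n s), (HT n t) by lra. apply Hpl; lra.
    - rewrite Nat.add_succ_r in Hs.
      set (b := hh (S (n + k))).
      pose proof (hh_pos (S (S (n + k)))). pose proof (hh_S (S (n + k))).
      pose proof (hh_pos (S (n + k))).
      assert (Hb : b <= t).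
      { unfold b. pose proof (hh_le (S n) (S (n + k)) ltac:(lia)). lra. }
      assert (G1 : mdist (T s) (T b) <= eta * (b - s)).
      { rewrite (HT (S (n + k)) s), (HT (S (n + k)) b) by (unfold b; lra).
        apply Hpl; unfold b; lra. }
      assert (G2 : mdist (T b) (T t) <= eta * (t - b)).
      { apply (IH n); try lra. unfold b. rewrite hh_S. pose proof (hh_pos (n+k)). lra. }
      pose proof (mdist_tri _ (T s) (T b) (T t)). lra. }
  assert (Hpos : forall s t, 0 < s -> s <= t -> t <= 1 -> mdist (T s) (T t) <= eta * (t - s)).
  { intros s t Hs Hst Ht1.
    destruct (hh_find s) as [m Hm]; [lra|]. destruct (hh_find t) as [n Hn]; [lra|].
    destruct (Compare_dec.le_lt_dec n m) as [Hle|Hlt].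
    - replace m with (n + (m - n))%nat in Hm by lia. eapply Hchain; eauto.
    - pose proof (hh_le (S m) n Hlt). assert (s = t) by lra. subst.
      rewrite mdist_refl. lra. }
  assert (HT0 : T 0 = x).
  { unfold T. destruct (Rle_dec 0 0); [reflexivity | lra]. }
  exists T. split; [exact HT0|]. split.
  - intros s t Hs Hst Ht1. destruct (Rle_dec s 0) as [Hs0|Hs0].
    + assert (s = 0) by lra. subst s. rewrite HT0.
      destruct (Rle_dec t 0) as [Ht0|Ht0].
      { assert (Et : t = 0) by lra. rewrite Et, HT0, mdist_refl. lra. }
      apply Rnot_lt_le. intro Hc.
      set (D := mdist x (T t)) in *.
      destruct (hh_small (Rmin t ((D - eta * (t - 0)) / eps))) as [m Hm].
      { apply Rmin_pos; [lra|]. apply Rdiv_lt_0_compat; lra. }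
      pose proof (Rmin_l t ((D - eta * (t - 0)) / eps)).
      pose proof (Rmin_r t ((D - eta * (t - 0)) / eps)).
      pose proof (hh_pos m).
      assert (Hpm : T (hh m) = p m).
      { rewrite (HT m (hh m)) by (try rewrite hh_S; lra). apply Hpe. }
      assert (J1 : mdist (T (hh m)) (T t) <= eta * (t - hh m)) by (apply Hpos; lra).
      rewrite Hpm in J1. destruct (Hp m) as [_ J2].
      pose proof (mdist_tri _ x (p m) (T t)).
      assert (eps * hh m < D - eta * (t - 0)).
      { assert (J4 : hh m < (D - eta * (t - 0)) / eps) by lra.
        apply (Rmult_lt_compat_l eps) in J4; [|lra].
        replace (eps * ((D - eta * (t - 0)) / eps)) with (D - eta * (t - 0)) in J4
          by (field; lra). lra. }
      assert (0 <= eta * hh m) by (apply Rmult_le_pos; lra).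
      unfold D in *. nra.
    + apply Hpos; lra.
  - intros t Ht. destruct (hh_find t Ht) as [n Hn]. rewrite (HT n t) by lra.
    unfold piece. destruct (HG n) as (_ & _ & _ & Hom & _).
    apply Hom. split.
    + apply Rmult_le_pos; [apply Hc0 | lra].
    + rewrite <- Hcl. apply Rmult_le_compat_l; [apply Hc0 | lra].
Qed.

Lemma mdist_nonneg {X : MetricSpace} (x y : X) : 0 <= mdist x y.
Proof.
  pose proof (mdist_tri _ x y x). rewrite mdist_refl, (mdist_sym _ y x) in H. lra.
Qed.

Lemma le_div_mul c x y : 0 < c -> x <= y / c -> c * x <= y.
Proof.
  intros Hc H. apply (Rmult_le_compat_l c) in H; [|lra].
  replace (c * (y / c)) with y in H by (field; lra). exact H.
Qed.

Lemma mul_le_div c x y : 0 < c -> x <= c * y -> x / c <= y.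
Proof.
  intros Hc H. apply (Rmult_le_compat_r (/ c)) in H; [|left; apply Rinv_0_lt_compat; lra].
  replace (c * y * / c) with y in H by (field; lra). exact H.
Qed.

Lemma A_ge1 (X : MetricSpace) (Om : X -> Prop) A : A_uniform X Om A -> 1 <= A.
Proof.
  intros [[u [Hu [Hc Hnc]]] HU].
  assert (Hn : exists n, u n <> u 0%nat).
  { apply NNPP. intro Hno. apply Hnc. exists (u 0%nat). split; [apply Hu|].
    intros eps Heps. exists 0%nat. intros n _.
    assert (u n = u 0%nat) by (apply NNPP; intro; apply Hno; exists n; assumption).
    rewrite H, mdist_refl. exact Heps. }
  destruct Hn as [n Hn].
  destruct (HU (u n) (u 0%nat) (Hu n) (Hu 0%nat)) as (g & l & Hl & Hg0 & Hgl & _ & Har & HlA & _).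
  pose proof (arc_lip g l Har 0 l (Rle_refl _) Hl (Rle_refl _)) as Hd.
  rewrite Hg0, Hgl in Hd.
  pose proof (mdist_nonneg (u n) (u 0%nat)).
  assert (mdist (u n) (u 0%nat) <> 0) by (intro E; apply Hn, mdist_sep, E).
  nra.
Qed.

Lemma tail_point {X : MetricSpace} (a x P : X) A r eta :
  1 <= A -> 0 < r -> r <= mdist a x < 2 * r -> eta <= r / 2 -> mdist x P <= eta ->
  r / (4 * A) <= mdist a P < 4 * A * r.
Proof.
  intros HA Hr Hx He HP.
  pose proof (mdist_tri _ a x P). pose proof (mdist_tri _ a P x).
  rewrite (mdist_sym _ P x) in H0.
  split.
  - apply mul_le_div; [lra|]. nra.
  - nra.
Qed.

Lemma mid_point {X : MetricSpace} (a x0 y0 : X) (g : R -> X) l u A r eta d :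
  1 <= A -> 0 < r -> 0 <= l -> 0 <= u <= l -> Lip g 0 l 1 -> g 0 = x0 -> g l = y0 ->
  mdist (g u) a >= / A * Rmin u (l - u) ->
  r / 2 <= mdist a x0 < 2 * r + eta -> r / 2 <= mdist a y0 < 2 * r + eta ->
  l <= A * d + 2 * (A * eta) ->
  2 * r + A * d / 2 + (1 + A) * eta <= 4 * A * r ->
  r / (4 * A) <= mdist a (g u) < 4 * A * r.
Proof.
  intros HA Hr Hl Hu HL H0 Hl0 Hb Hx Hy Hll Hc.
  rewrite mdist_sym in Hb.
  pose proof (HL 0 u (Rle_refl _) (proj1 Hu) (proj2 Hu)) as L1.
  pose proof (HL u l (proj1 Hu) (proj2 Hu) (Rle_refl _)) as L2.
  rewrite H0 in L1. rewrite Hl0 in L2.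
  pose proof (mdist_tri _ a x0 (g u)). pose proof (mdist_tri _ a y0 (g u)).
  pose proof (mdist_tri _ a (g u) x0). pose proof (mdist_tri _ a (g u) y0).
  rewrite (mdist_sym _ y0 (g u)) in H1.
  rewrite (mdist_sym _ (g u) x0) in H2.
  split.
  - apply mul_le_div; [lra|].
    set (D := mdist a (g u)) in *.
    assert (HD0 : 0 <= D) by apply mdist_nonneg.
    destruct (Rle_dec u (l - u)).
    + rewrite Rmin_left in Hb by lra. apply Rge_le in Hb.
      assert (u <= A * D).
      { apply (Rmult_le_compat_l A) in Hb; [|lra].
        replace (A * (/ A * u)) with u in Hb by (field; lra). lra. }
      nra.
    + rewrite Rmin_right in Hb by lra. apply Rge_le in Hb.
      assert (l - u <= A * D).
      { apply (Rmult_le_compat_l A) in Hb; [|lra].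
        replace (A * (/ A * (l - u))) with (l - u) in Hb by (field; lra). lra. }
      nra.
  - nra.
Qed.

Theorem lemma9p9 (X : MetricSpace) (Om : X -> Prop) (A : R)
  (hcompl : is_completion_of X Om) (hunif : A_uniform X Om A)
  (a : X) (ha : ~ Om a) :
  loc_ann_qc X (fun z => z <> a) a (4 * A).
Proof.
  pose proof (A_ge1 X Om A hunif) as HA.
  destruct hcompl as [_ hd].
  destruct hunif as [_ HU].
  assert (HU' : UnifCurves Om A).
  { intros x y Hx Hy. destruct (HU x y Hx Hy) as (g & l & H1 & H2 & H3 & H4 & H5 & H6 & _).
    exists g, l. tauto. }
  assert (Hna : forall p, Om p -> p <> a) by (intros p Hp E; subst; contradiction).
  split; [lra|]. exists 1. split; [lra|].
  intros r Hr _ x y Hx Hy Hxr Hyr.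
  destruct (classic (x = y)) as [Exy|Nxy].
  - subst y. exists (fun _ => x).
    assert (HL : Lip (fun _ : R => x) 0 1 0).
    { intros s t _ _ _. rewrite mdist_refl. lra. }
    destruct (Lip_length _ 0 1 0 (Rle_refl _) ltac:(lra) HL) as [L [HLc HLb]].
    exists L. split; [exact (Lip_cont _ 0 1 0 (Rle_refl _) HL)|].
    split; [reflexivity|]. split; [reflexivity|]. split.
    + intros t _. split; [exact Hx|].
      apply (tail_point a x x A r 0); try lra. rewrite mdist_refl; lra.
    + split; [exact HLc|]. rewrite mdist_refl. lra.
  - set (d := mdist x y).
    assert (Hd : 0 < d).
    { pose proof (mdist_nonneg x y).
      assert (d <> 0) by (intro E; apply Nxy, mdist_sep, E). unfold d in *. lra. }
    assert (Hd4 : d < 4 * r).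
    { pose proof (mdist_tri _ x a y). rewrite (mdist_sym _ x a) in H. unfold d. lra. }
    assert (Hslack : 0 < 4 * A * r - 2 * r - A * d / 2) by nra.
    set (eta := Rmin (r / 2) (Rmin (2 * A * d / (4 * A + 4)) ((4 * A * r - 2 * r - A * d / 2) / (1 + A)))).
    assert (He0 : 0 < eta).
    { unfold eta. apply Rmin_pos; [lra|]. apply Rmin_pos; apply Rdiv_lt_0_compat; nra. }
    assert (He1 : eta <= r / 2) by apply Rmin_l.
    assert (He2 : (4 * A + 4) * eta <= 2 * A * d).
    { apply le_div_mul; [lra|]. eapply Rle_trans; [apply Rmin_r|]. apply Rmin_l. }
    assert (He3 : (1 + A) * eta <= 4 * A * r - 2 * r - A * d / 2).
    { apply le_div_mul; [lra|]. eapply Rle_trans; [apply Rmin_r|]. apply Rmin_r. }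
    destruct (tail_curve Om A ltac:(lra) hd HU' x eta He0) as (Tx & Tx0 & TxL & TxO).
    destruct (tail_curve Om A ltac:(lra) hd HU' y eta He0) as (Ty & Ty0 & TyL & TyO).
    set (x0 := Tx 1). set (y0 := Ty 1).
    assert (Ox0 : Om x0) by (apply TxO; lra).
    assert (Oy0 : Om y0) by (apply TyO; lra).
    assert (Dx0 : mdist x x0 <= eta).
    { pose proof (TxL 0 1 ltac:(lra) ltac:(lra) ltac:(lra)). rewrite Tx0 in H. unfold x0. lra. }
    assert (Dy0 : mdist y y0 <= eta).
    { pose proof (TyL 0 1 ltac:(lra) ltac:(lra) ltac:(lra)). rewrite Ty0 in H. unfold y0. lra. }
    destruct (HU x0 y0 Ox0 Oy0) as (gm & l & Hl & Hg0 & Hgl & HgO & Har & HlA & Hbd).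
    assert (Hll : l <= A * d + 2 * (A * eta)).
    { pose proof (mdist_tri _ x0 x y0). pose proof (mdist_tri _ x y y0).
      rewrite (mdist_sym _ x0 x) in H.
      assert (mdist x0 y0 <= d + 2 * eta) by (unfold d; lra).
      assert (A * mdist x0 y0 <= A * (d + 2 * eta)) by (apply Rmult_le_compat_l; lra).
      lra. }
    set (f1 := fun t => Tx (4 * (t - 0))).
    set (f2 := fun t => gm (2 * l * (t - 1 / 4))).
    set (f3 := fun t => Ty (4 * (1 - t))).
    set (inner := fun t => if Rle_dec t (1 / 4) then f1 t else f2 t).
    set (g := fun t => if Rle_dec t (3 / 4) then inner t else f3 t).
    set (K := 2 * A * (d + 2 * eta) + 4 * eta).
    assert (HK0 : 0 <= K) by (unfold K; nra).
    assert (HKb : K <= 4 * A * d) by (unfold K; nra).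
    assert (L1 : Lip f1 0 (1 / 4) K).
    { apply Lip_mono with (K := eta * 4); [unfold K; nra|].
      apply (Lip_affine Tx 0 1); [exact TxL | lra | lra | lra]. }
    assert (L2 : Lip f2 (1 / 4) (3 / 4) K).
    { apply Lip_mono with (K := 1 * (2 * l)); [unfold K; nra|].
      apply (Lip_affine gm 0 l); [apply arc_lip; exact Har | lra | nra | nra]. }
    assert (L3 : Lip f3 (3 / 4) 1 K).
    { apply Lip_mono with (K := eta * 4); [unfold K; nra|].
      apply (Lip_rev Ty 0 1); [exact TyL | lra | lra | lra]. }
    assert (Li : Lip inner 0 (3 / 4) K).
    { apply Lip_glue; [exact L1 | exact L2 |].
      unfold f1, f2. replace (4 * (1 / 4 - 0)) with 1 by field.
      replace (2 * l * (1 / 4 - 1 / 4)) with 0 by ring. rewrite Hg0. reflexivity. }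
    assert (Lg : Lip g 0 1 K).
    { apply Lip_glue; [exact Li | exact L3 |].
      unfold inner, f2, f3. destruct (Rle_dec (3 / 4) (1 / 4)); [lra|].
      replace (2 * l * (3 / 4 - 1 / 4)) with l by field.
      replace (4 * (1 - 3 / 4)) with 1 by field. rewrite Hgl. reflexivity. }
    destruct (Lip_length g 0 1 K HK0 ltac:(lra) Lg) as [L [HLc HLb]].
    exists g, L. split; [exact (Lip_cont g 0 1 K HK0 Lg)|].
    split.
    { unfold g, inner, f1. destruct (Rle_dec 0 (3/4)); [|lra].
      destruct (Rle_dec 0 (1/4)); [|lra]. replace (4 * (0 - 0)) with 0 by ring. exact Tx0. }
    split.
    { unfold g, f3. destruct (Rle_dec 1 (3/4)); [lra|].
      replace (4 * (1 - 1)) with 0 by ring. exact Ty0. }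
    split; [| split; [exact HLc | unfold K in *; nra]].
    intros t Ht. unfold g, inner, f1, f2, f3.
    assert (Hxa : r / 2 <= mdist a x0 < 2 * r + eta).
    { pose proof (mdist_tri _ a x x0). pose proof (mdist_tri _ a x0 x).
      rewrite (mdist_sym _ x0 x) in H0. lra. }
    assert (Hya : r / 2 <= mdist a y0 < 2 * r + eta).
    { pose proof (mdist_tri _ a y y0). pose proof (mdist_tri _ a y0 y).
      rewrite (mdist_sym _ y0 y) in H0. lra. }
    destruct (Rle_dec t (3 / 4)); [destruct (Rle_dec t (1 / 4))|].
    + split.
      * destruct (Req_dec t 0) as [E|E].
        { rewrite E. replace (4 * (0 - 0)) with 0 by ring. rewrite Tx0. exact Hx. }
        apply Hna, TxO; lra.
      * apply (tail_point a x _ A r eta); try lra.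
        pose proof (TxL 0 (4 * (t - 0)) ltac:(lra) ltac:(lra) ltac:(lra)). rewrite Tx0 in H.
        nra.
    + assert (Hu : 0 <= 2 * l * (t - 1 / 4) <= l) by nra.
      split.
      * apply Hna, HgO; exact Hu.
      * apply (mid_point a x0 y0 gm l _ A r eta d HA Hr Hl Hu (arc_lip _ _ Har) Hg0 Hgl
                 (Hbd _ Hu a ha) Hxa Hya Hll); lra.
    + split.
      * destruct (Req_dec t 1) as [E|E].
        { rewrite E. replace (4 * (1 - 1)) with 0 by ring. rewrite Ty0. exact Hy. }
        apply Hna, TyO; lra.
      * apply (tail_point a y _ A r eta); try lra.
        pose proof (TyL 0 (4 * (1 - t)) ltac:(lra) ltac:(lra) ltac:(lra)). rewrite Ty0 in H.
        nra.
Qed.
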